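(* Let $\mathbb{X}=\ell_4^2$. For $((x,y),(x_1,y_1))\in S_{\mathbb{X}}\times S_{\mathbb{X}}$, the pair $((x,y),(x_1,y_1))$ is not a CPP if and only if $xy=0$ and $x_1y_1\neq0$.
   Context: $\ell_4^2$ is $\mathbb{R}^2$ with norm $\|(a,b)\|=(a^4+b^4)^{1/4}$; $S_{\mathbb{X}}$ its unit sphere. $B(u,r)=\{v:\|v-u\|<r\}$. $u\perp_B v$ means $\|u+\lambda v\|\ge\|u\|$ for all real $\lambda$; $u^\perp=\{v:u\perp_Bv\}$. For $u,v\in S_{\mathbb{X}}$, $(u,v)$ is a CPP if there exist $r>0,\mu>0$ such that for all $z\in u^\perp\cap S_{\mathbb{X}}$, all $w\in v^\perp\cap S_{\mathbb{X}}$ and all $a,b\in\mathbb{R}$, $au+bz\in B(u,r)\cap S_{\mathbb{X}}$ implies $\|av+b\mu w\|\le1$. *)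

(* Defs.v *)
From Stdlib Require Import Reals.
Open Scope R_scope.

(* The space l_4^2 : R^2 with ||(a,b)|| = (a^4 + b^4)^(1/4),
   written as sqrt (sqrt (a^4 + b^4)) (valid since a^4+b^4 >= 0). *)
Definition vec := (R * R)%type.
Definition vadd (u v : vec) : vec := (fst u + fst v, snd u + snd v).
Definition vscal (c : R) (u : vec) : vec := (c * fst u, c * snd u).
Definition vsub (u v : vec) : vec := vadd u (vscal (-1) v).
Definition norm4 (u : vec) : R := sqrt (sqrt (fst u ^ 4 + snd u ^ 4)).

Definition in_sphere (u : vec) : Prop := norm4 u = 1.

Definition in_ball (u : vec) (r : R) (v : vec) : Prop := norm4 (vsub v u) < r.

Definition birkhoff (u v : vec) : Prop :=
  forall lam : R, norm4 (vadd u (vscal lam v)) >= norm4 u.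

Definition CPP (u v : vec) : Prop :=
  exists r : R, r > 0 /\ exists mu : R, mu > 0 /\
    forall (z w : vec) (a b : R),
      birkhoff u z -> in_sphere z ->
      birkhoff v w -> in_sphere w ->
      in_ball u r (vadd (vscal a u) (vscal b z)) ->
      in_sphere (vadd (vscal a u) (vscal b z)) ->
      norm4 (vadd (vscal a v) (vscal (b * mu) w)) <= 1.

(* Main.v *)
Require Import Defs.
From Stdlib Require Import Reals Lra Psatz.
Open Scope R_scope.

Definition P4 (q : vec) := fst q ^ 4 + snd q ^ 4.

Lemma pow4_lt s t : 0 <= s -> s < t -> s ^ 4 < t ^ 4.
Proof.
  intros Hs Hst.
  assert (H2 : s * s < t * t) by nra.
  assert (E1 : s ^ 4 = (s*s)*(s*s)) by ring.
  assert (E2 : t ^ 4 = (t*t)*(t*t)) by ring.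
  rewrite E1, E2. assert (0 <= s*s) by nra. nra.
Qed.

Lemma pow4_le s t : 0 <= s -> s <= t -> s ^ 4 <= t ^ 4.
Proof. intros; apply pow_incr; lra. Qed.

Lemma pow4_le_iff s t : 0 <= s -> 0 <= t -> (s <= t <-> s ^ 4 <= t ^ 4).
Proof.
  intros Hs Ht; split; intro H. apply pow4_le; lra.
  destruct (Rle_lt_dec s t) as [|Hlt]; auto.
  apply pow4_lt in Hlt; lra.
Qed.

Lemma pow4_lt_iff s t : 0 <= s -> 0 <= t -> (s < t <-> s ^ 4 < t ^ 4).
Proof.
  intros Hs Ht; split; intro H. apply pow4_lt; lra.
  destruct (Rlt_le_dec s t) as [|Hle]; auto.
  apply pow4_le in Hle; lra.
Qed.

Lemma P4_nonneg q : 0 <= P4 q.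
Proof. unfold P4. nra. Qed.

Lemma norm4_nonneg q : 0 <= norm4 q.
Proof. unfold norm4. apply sqrt_pos. Qed.

Lemma norm4_pow q : norm4 q ^ 4 = P4 q.
Proof.
  unfold norm4. fold (P4 q).
  assert (H := P4_nonneg q).
  assert (H1 : 0 <= sqrt (P4 q)) by apply sqrt_pos.
  replace (sqrt (sqrt (P4 q)) ^ 4) with
    ((sqrt (sqrt (P4 q)) * sqrt (sqrt (P4 q))) * (sqrt (sqrt (P4 q)) * sqrt (sqrt (P4 q)))) by ring.
  rewrite !sqrt_sqrt; auto.
Qed.

Lemma sphere_iff q : in_sphere q <-> P4 q = 1.
Proof.
  unfold in_sphere. rewrite <- norm4_pow. assert (H := norm4_nonneg q).
  split; intro E. rewrite E; ring.
  apply Rle_antisym.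
  apply (proj2 (pow4_le_iff (norm4 q) 1 H ltac:(lra))). rewrite E. simpl; lra.
  apply (proj2 (pow4_le_iff 1 (norm4 q) ltac:(lra) H)). rewrite E. simpl; lra.
Qed.

Lemma le1_iff q : norm4 q <= 1 <-> P4 q <= 1.
Proof.
  rewrite <- norm4_pow. rewrite (pow4_le_iff (norm4 q) 1 (norm4_nonneg q) ltac:(lra)).
  replace (1 ^ 4) with 1 by ring. tauto.
Qed.

Lemma ball_iff u r v : 0 < r -> (in_ball u r v <-> P4 (vsub v u) < r ^ 4).
Proof.
  intro Hr. unfold in_ball. rewrite <- norm4_pow.
  apply pow4_lt_iff. apply norm4_nonneg. lra.
Qed.

Lemma ge_iff p q : norm4 p >= norm4 q <-> P4 p >= P4 q.
Proof.
  rewrite <- !norm4_pow. assert (H1 := norm4_nonneg p). assert (H2 := norm4_nonneg q).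
  assert (K := pow4_le_iff _ _ H2 H1). split; intro; apply Rle_ge; apply K || apply <- K; lra.
Qed.

Lemma P4_pair a b : P4 (a, b) = a ^ 4 + b ^ 4.
Proof. reflexivity. Qed.

Lemma birk_of x y z1 z2 : x^3*z1 + y^3*z2 = 0 -> birkhoff (x,y) (z1,z2).
Proof.
  intros g lam. apply ge_iff. unfold vadd, vscal, P4; simpl.
  assert (E : (x + lam * z1) ^ 4 + (y + lam * z2) ^ 4 - (x ^ 4 + y ^ 4)
    = 4 * lam * (x^3*z1 + y^3*z2) + (lam*z1)^2 * ((2*x + lam*z1)^2 + 2*x^2)
      + (lam*z2)^2 * ((2*y + lam*z2)^2 + 2*y^2)) by ring.
  rewrite g in E.
  assert (0 <= (lam*z1)^2 * ((2*x + lam*z1)^2 + 2*x^2)) by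
    (apply Rmult_le_pos; [apply pow2_ge_0 | assert (0 <= (2*x + lam*z1)^2) by apply pow2_ge_0; assert (0 <= x^2) by apply pow2_ge_0; lra]).
  assert (0 <= (lam*z2)^2 * ((2*y + lam*z2)^2 + 2*y^2)) by
    (apply Rmult_le_pos; [apply pow2_ge_0 | assert (0 <= (2*y + lam*z2)^2) by apply pow2_ge_0; assert (0 <= y^2) by apply pow2_ge_0; lra]).
  lra.
Qed.

Lemma sq_le1 a b : a ^ 4 + b ^ 4 = 1 -> a ^ 2 <= 1.
Proof.
  intro H. assert (0 <= b^4) by nra. assert (0 <= a^2) by nra.
  assert (a^4 = a^2 * a^2) by ring. nra.
Qed.

Lemma prod_le1 a b : 0 <= a <= 1 -> 0 <= b <= 1 -> a * b <= 1.
Proof. intros. nra. Qed.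

Lemma sqpos a : 0 <= a ^ 2.
Proof. apply pow2_ge_0. Qed.

Lemma birk_to x y z1 z2 : x^4 + y^4 = 1 -> z1^4 + z2^4 = 1 ->
  birkhoff (x,y) (z1,z2) -> x^3*z1 + y^3*z2 = 0.
Proof.
  intros Hu Hz Hb.
  assert (hx := sq_le1 x y Hu). assert (hy := sq_le1 y x ltac:(lra)).
  assert (hz1 := sq_le1 z1 z2 Hz). assert (hz2 := sq_le1 z2 z1 ltac:(lra)).
  assert (px := sqpos x). assert (py := sqpos y). assert (pz1 := sqpos z1). assert (pz2 := sqpos z2).
  assert (A1 : x^2*z1^2 <= 1) by (apply prod_le1; lra).
  assert (A2 : y^2*z2^2 <= 1) by (apply prod_le1; lra).
  assert (B1 : x^2*(z1^2*(z1^2*z1^2)) <= 1).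
  { apply prod_le1; split; try lra. assert (0 <= z1^2*z1^2) by nra. nra.
    assert (z1^2*z1^2 <= 1) by (apply prod_le1; lra). apply prod_le1; split; nra. }
  assert (B2 : y^2*(z2^2*(z2^2*z2^2)) <= 1).
  { apply prod_le1; split; try lra. assert (0 <= z2^2*z2^2) by nra. nra.
    assert (z2^2*z2^2 <= 1) by (apply prod_le1; lra). apply prod_le1; split; nra. }
  assert (C1 : (x^2*(x^2*x^2))*z1^2 <= 1).
  { apply prod_le1; split; try lra. assert (0 <= x^2*x^2) by nra. nra.
    assert (x^2*x^2 <= 1) by (apply prod_le1; lra). apply prod_le1; split; nra. }
  assert (C2 : (y^2*(y^2*y^2))*z2^2 <= 1).
  { apply prod_le1; split; try lra. assert (0 <= y^2*y^2) by nra. nra.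
    assert (y^2*y^2 <= 1) by (apply prod_le1; lra). apply prod_le1; split; nra. }
  set (g := x^3*z1 + y^3*z2).
  set (S := x^2*z1^2 + y^2*z2^2).
  set (T := x*z1^3 + y*z2^3).
  assert (HS : S <= 2) by (unfold S; lra).
  assert (HT : T^2 <= 4).
  { unfold T. assert (0 <= (x*z1^3 - y*z2^3)^2) by apply sqpos.
    assert (E : (x*z1^3 + y*z2^3)^2 = 2*(x^2*(z1^2*(z1^2*z1^2)) + y^2*(z2^2*(z2^2*z2^2))) - (x*z1^3 - y*z2^3)^2) by ring.
    lra. }
  assert (HG : g^2 <= 4).
  { unfold g. assert (0 <= (x^3*z1 - y^3*z2)^2) by apply sqpos.
    assert (E : (x^3*z1 + y^3*z2)^2 = 2*((x^2*(x^2*x^2))*z1^2 + (y^2*(y^2*y^2))*z2^2) - (x^3*z1 - y^3*z2)^2) by ring.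
    lra. }
  destruct (Req_dec g 0) as [|Hg]; auto. exfalso.
  set (lam := - g / 46).
  specialize (Hb lam). apply ge_iff in Hb. unfold vadd, vscal, P4 in Hb; cbn [fst snd] in Hb.
  assert (E : (x + lam * z1) ^ 4 + (y + lam * z2) ^ 4 =
     (x^4+y^4) + 4*lam*g + lam^2*(6*S + 4*(lam*T) + lam^2*(z1^4+z2^4))) by (unfold g, S, T; ring).

  rewrite E, Hu, Hz in Hb.
  assert (Hl2 : lam^2 <= 1) by (unfold lam; nra).
  assert (H4 : 4*(lam*T) <= 10).
  { assert (0 <= (lam - T)^2) by apply sqpos. nra. }
  assert (Hg2 : 0 < g^2) by (apply pow2_gt_0 || nra; auto).
  assert (R : 6*S + 4*(lam*T) + lam^2*1 <= 23) by nra.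
  assert (lam^2*(6*S + 4*(lam*T) + lam^2*1) <= lam^2 * 23) by (apply Rmult_le_compat_l; [apply sqpos|lra]).
  assert (4*lam*g = -4*g^2/46) by (unfold lam; field).
  assert (lam^2 = g^2/(46*46)) by (unfold lam; field).
  nra.
Qed.

Lemma expand x y z1 z2 a b : (a*x+b*z1)^4 + (a*y+b*z2)^4 =
  a^4*(x^4+y^4) + 4*a^3*b*(x^3*z1+y^3*z2) + 6*a^2*b^2*(x^2*z1^2+y^2*z2^2)
  + 4*a*b^3*(x*z1^3+y*z2^3) + b^4*(z1^4+z2^4).
Proof. ring. Qed.

Lemma ST_bounds x y z1 z2 : x^4+y^4=1 -> z1^4+z2^4=1 ->
  x^2*z1^2+y^2*z2^2 <= 2 /\ (x*z1^3+y*z2^3)^2 <= 4 /\ x^2*y^2 <= x^2*z1^2+y^2*z2^2.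
Proof.
  intros Hu Hz.
  assert (hx := sq_le1 x y Hu). assert (hy := sq_le1 y x ltac:(lra)).
  assert (hz1 := sq_le1 z1 z2 Hz). assert (hz2 := sq_le1 z2 z1 ltac:(lra)).
  assert (px := sqpos x). assert (py := sqpos y). assert (pz1 := sqpos z1). assert (pz2 := sqpos z2).
  assert (A1 : x^2*z1^2 <= 1) by (apply prod_le1; lra).
  assert (A2 : y^2*z2^2 <= 1) by (apply prod_le1; lra).
  assert (B1 : x^2*(z1^2*(z1^2*z1^2)) <= 1).
  { apply prod_le1; split; try lra. assert (0 <= z1^2*z1^2) by nra. nra.
    assert (z1^2*z1^2 <= 1) by (apply prod_le1; lra). apply prod_le1; split; nra. }
  assert (B2 : y^2*(z2^2*(z2^2*z2^2)) <= 1).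
  { apply prod_le1; split; try lra. assert (0 <= z2^2*z2^2) by nra. nra.
    assert (z2^2*z2^2 <= 1) by (apply prod_le1; lra). apply prod_le1; split; nra. }
  split; [lra|split].
  { assert (0 <= (x*z1^3 - y*z2^3)^2) by apply sqpos.
    assert (E : (x*z1^3 + y*z2^3)^2 = 2*(x^2*(z1^2*(z1^2*z1^2)) + y^2*(z2^2*(z2^2*z2^2))) - (x*z1^3 - y*z2^3)^2) by ring.
    lra. }
  assert (Hs : 1 <= z1^2 + z2^2).
  { assert (E : (z1^2+z2^2)^2 = z1^4+z2^4 + 2*(z1^2*z2^2)) by ring.
    assert (0 <= z1^2*z2^2) by nra. nra. }
  assert (x^2*y^2*z1^2 <= x^2*z1^2).
  { assert (0 <= x^2*z1^2) by nra. nra. }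
  assert (x^2*y^2*z2^2 <= y^2*z2^2).
  { assert (0 <= y^2*z2^2) by nra. nra. }
  assert (0 <= x^2*y^2) by nra. nra.
Qed.

Lemma sq_lt_of_pow4 q r : 0 < r -> q^4 < r^4 -> q^2 < r^2.
Proof.
  intros Hr H. destruct (Rlt_le_dec (q^2) (r^2)) as [|Hle]; auto.
  assert (0 <= r^2) by apply sqpos.
  assert (r^2*r^2 <= q^2*q^2) by (apply Rmult_le_compat; lra).
  assert (q^4 = q^2*q^2) by ring. assert (r^4 = r^2*r^2) by ring. lra.
Qed.

Lemma neg_bound X K : 0 <= K -> X^2 <= K^2 -> - K <= X /\ X <= K.
Proof. intros. split; nra. Qed.

Lemma cpp_nonaxis x y x1 y1 : x^4+y^4 = 1 -> x1^4+y1^4 = 1 -> x*y <> 0 ->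
  CPP (x,y) (x1,y1).
Proof.
  intros Hu Hv Hxy.
  assert (hx := sq_le1 x y Hu). assert (hy := sq_le1 y x ltac:(lra)).
  assert (px := sqpos x). assert (py := sqpos y).
  set (m := x^2*y^2).
  assert (Hm : 0 < m).
  { unfold m. replace (x^2*y^2) with ((x*y)^2) by ring. nra. }
  assert (Hm1 : m <= 1) by (unfold m; apply prod_le1; lra).
  exists (m/32). split; [lra|]. exists (m/4). split; [lra|].
  intros [z1 z2] [w1 w2] a b Bz Sz Bw Sw Ball SP.
  apply sphere_iff in Sz. apply sphere_iff in Sw. apply sphere_iff in SP.
  rewrite P4_pair in Sz, Sw.
  apply birk_to in Bz; auto. apply birk_to in Bw; auto.
  apply ball_iff in Ball; [|lra].
  unfold vsub, vadd, vscal, P4 in Ball, SP. cbn [fst snd] in Ball, SP.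
  apply le1_iff. unfold vadd, vscal, P4. cbn [fst snd].
  set (r := m/32) in *. set (mu := m/4) in *.
  set (q1 := a*x + b*z1 + -1*x) in *.
  set (q2 := a*y + b*z2 + -1*y) in *.
  assert (Q1 : q1^2 < r^2).
  { apply sq_lt_of_pow4; [unfold r; lra|]. assert (0 <= q2^4) by nra. lra. }
  assert (Q2 : q2^2 < r^2).
  { apply sq_lt_of_pow4; [unfold r; lra|]. assert (0 <= q1^4) by nra. lra. }
  assert (Ea : a - 1 = x^3*q1 + y^3*q2).
  { unfold q1, q2. replace (a-1) with ((a-1)*(x^4+y^4) + b*(x^3*z1+y^3*z2)) by (rewrite Hu, Bz; ring). ring. }
  set (D := x*z2 - y*z1).
  assert (Eb : b*D = -y*q1 + x*q2) by (unfold D, q1, q2; ring).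
  assert (Ez1 : z1 = -y^3*D).
  { unfold D. replace z1 with (z1*(x^4+y^4)) at 1 by (rewrite Hu; ring).
    replace (-y^3*(x*z2 - y*z1)) with (y^4*z1 - x*(y^3*z2)) by ring.
    replace (y^3*z2) with (-(x^3*z1)) by lra. ring. }
  assert (Ez2 : z2 = x^3*D).
  { unfold D. replace z2 with (z2*(x^4+y^4)) at 1 by (rewrite Hu; ring).
    replace (x^3*(x*z2 - y*z1)) with (x^4*z2 - y*(x^3*z1)) by ring.
    replace (x^3*z1) with (-(y^3*z2)) by lra. ring. }
  assert (HD : 1/2 <= D^2).
  { assert (E : z1^4 + z2^4 = D^4 * ((x^4)^3 + (y^4)^3)) by (rewrite Ez1, Ez2 at 1; ring).
    assert (x^4 <= 1) by nra. assert (y^4 <= 1) by nra.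
    assert (0 <= x^4) by nra. assert (0 <= y^4) by nra.
    assert ((x^4)^3 <= 1) by (replace ((x^4)^3) with (x^4*(x^4*x^4)) by ring; apply prod_le1; [lra | split; [nra | apply prod_le1; lra]]).
    assert ((y^4)^3 <= 1) by (replace ((y^4)^3) with (y^4*(y^4*y^4)) by ring; apply prod_le1; [lra | split; [nra | apply prod_le1; lra]]).
    assert (0 <= D^4) by nra.
    assert (1/2 <= D^4) by nra.
    assert (D^4 = D^2*D^2) by ring. assert (0 <= D^2) by apply sqpos. nra. }
  assert (x^2*(x^2*x^2) <= 1) by (apply prod_le1; [lra | split; [nra | apply prod_le1; lra]]).
  assert (y^2*(y^2*y^2) <= 1) by (apply prod_le1; [lra | split; [nra | apply prod_le1; lra]]).
  assert (Ha : (a-1)^2 < 4*r^2).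
  { rewrite Ea. assert (0 <= (x^3*q1 - y^3*q2)^2) by apply sqpos.
    assert (E : (x^3*q1 + y^3*q2)^2 = 2*((x^2*(x^2*x^2))*q1^2 + (y^2*(y^2*y^2))*q2^2) - (x^3*q1 - y^3*q2)^2) by ring.
    assert (0 <= q1^2) by apply sqpos. assert (0 <= q2^2) by apply sqpos.
    assert ((x^2*(x^2*x^2))*q1^2 <= q1^2) by nra.
    assert ((y^2*(y^2*y^2))*q2^2 <= q2^2) by nra. lra. }
  assert (Hb : (b*D)^2 < 4*r^2).
  { rewrite Eb. assert (0 <= (y*q1 + x*q2)^2) by apply sqpos.
    assert (E : (-y*q1 + x*q2)^2 = 2*(y^2*q1^2 + x^2*q2^2) - (y*q1 + x*q2)^2) by ring.
    assert (0 <= q1^2) by apply sqpos. assert (0 <= q2^2) by apply sqpos.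
    assert (y^2*q1^2 <= q1^2) by nra. assert (x^2*q2^2 <= q2^2) by nra. lra. }
  assert (Hb2 : b^2 < 8*r^2).
  { assert (E : (b*D)^2 = b^2*D^2) by ring. assert (0 <= b^2) by apply sqpos. nra. }
  assert (Ha2 : 1/2 <= a).
  { assert (r <= 1/32) by (unfold r; lra). assert (0 < r) by (unfold r; lra). nra. }
  destruct (ST_bounds x y z1 z2 Hu Sz) as [Su1 [Tu Su2]].
  fold m in Su2.
  destruct (ST_bounds x1 y1 w1 w2 Hv Sw) as [Sv1 [Tv _]].
  set (Su := x^2*z1^2+y^2*z2^2) in *. set (Tu_ := x*z1^3+y*z2^3) in *.
  set (Sv := x1^2*w1^2+y1^2*w2^2) in *. set (Tv_ := x1*w1^3+y1*w2^3) in *.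
  assert (0 <= Sv) by (unfold Sv; nra).
  assert (KU : - (m/5) <= b*Tu_ /\ b*Tu_ <= m/5).
  { apply neg_bound; [lra|]. replace ((b*Tu_)^2) with (b^2*Tu_^2) by ring.
    assert (0 <= b^2) by apply sqpos. assert (0 <= Tu_^2) by apply sqpos.
    assert (b^2*Tu_^2 <= 8*r^2*4) by (apply Rmult_le_compat; lra). unfold r in *. nra. }
  assert (KV : - (m/5) <= b*Tv_ /\ b*Tv_ <= m/5).
  { apply neg_bound; [lra|]. replace ((b*Tv_)^2) with (b^2*Tv_^2) by ring.
    assert (0 <= b^2) by apply sqpos. assert (0 <= Tv_^2) by apply sqpos.
    assert (b^2*Tv_^2 <= 8*r^2*4) by (apply Rmult_le_compat; lra). unfold r in *. nra. }
  assert (Inner : 6*a^2*mu^2*Sv + 4*a*mu^3*(b*Tv_) + mu^4*b^2 <= 6*a^2*Su + 4*a*(b*Tu_) + b^2).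
  { assert (Hmu : mu = m/4) by reflexivity.
    assert (0 < mu) by lra. assert (mu <= 1/4) by lra.
    assert (0 <= a^2) by apply sqpos.
    assert (i1 : 6*a^2*mu^2*Sv <= 3/4*a^2*m).
    { assert (mu^2*Sv <= mu^2 * 2) by (apply Rmult_le_compat_l; [apply sqpos|lra]).
      assert (mu^2 * 2 <= m/8) by (rewrite Hmu; nra).
      assert (a^2*(mu^2*Sv) <= a^2*(m/8)) by (apply Rmult_le_compat_l; lra). nra. }
    assert (i2 : 4*a*mu^3*(b*Tv_) <= a*m/80).
    { assert (0 < mu^3) by (apply pow_lt; lra). assert (mu^3 <= 1/64) by (replace (mu^3) with (mu*(mu*mu)) by ring; nra).
      assert (mu^3*(b*Tv_) <= mu^3*(m/5)) by (apply Rmult_le_compat_l; lra).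
      assert (mu^3*(m/5) <= m/320) by nra.
      assert (a*(mu^3*(b*Tv_)) <= a*(m/320)) by (apply Rmult_le_compat_l; lra). nra. }
    assert (i3 : mu^4*b^2 <= b^2).
    { assert (0 <= b^2) by apply sqpos. assert (mu*mu <= 1/16) by nra. assert (mu^4 <= 1) by (replace (mu^4) with ((mu*mu)*(mu*mu)) by ring; nra). nra. }
    assert (i4 : 6*a^2*m <= 6*a^2*Su) by (apply Rmult_le_compat_l; lra).
    assert (i5 : 4*a*(-(m/5)) <= 4*a*(b*Tu_)) by (apply Rmult_le_compat_l; lra).
    assert (0 <= a*m) by nra. assert (a*m*(81/80) <= a*m*(5+1/4)*a) by (replace (a*m*(5+1/4)*a) with (a*m*((5+1/4)*a)) by ring; apply Rmult_le_compat_l; lra).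
    nra. }
  rewrite expand, Hv, Bw, Sw. rewrite expand, Hu, Bz, Sz in SP. fold Su Tu_ in SP. fold Sv Tv_.
  assert (0 <= b^2) by apply sqpos.
  assert (b^2 * (6*a^2*mu^2*Sv + 4*a*mu^3*(b*Tv_) + mu^4*b^2) <= b^2*(6*a^2*Su + 4*a*(b*Tu_) + b^2))
    by (apply Rmult_le_compat_l; lra).
  assert (E1 : a ^ 4 * 1 + 4 * a ^ 3 * (b * mu) * 0 + 6 * a ^ 2 * (b * mu) ^ 2 * Sv +
   4 * a * (b * mu) ^ 3 * Tv_ + (b * mu) ^ 4 * 1 = a^4 + b^2 * (6*a^2*mu^2*Sv + 4*a*mu^3*(b*Tv_) + mu^4*b^2)) by ring.
  assert (E2 : a ^ 4 * 1 + 4 * a ^ 3 * b * 0 + 6 * a ^ 2 * b ^ 2 * Su +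
   4 * a * b ^ 3 * Tu_ + b ^ 4 * 1 = a^4 + b^2*(6*a^2*Su + 4*a*(b*Tu_) + b^2)) by ring.
  lra.
Qed.

Lemma axis_ST x y z1 z2 : x^4+y^4=1 -> x*y=0 -> x^3*z1+y^3*z2=0 ->
  x^2*z1^2+y^2*z2^2 = 0 /\ x*z1^3+y*z2^3 = 0.
Proof.
  intros Hu Hxy g. destruct (Rmult_integral _ _ Hxy) as [->| ->].
  - assert (y <> 0) by (intro; subst; simpl in Hu; lra).
    assert (z2 = 0).
    { assert (y^3*z2 = 0) by (rewrite <- g; ring).
      destruct (Rmult_integral _ _ H0) as [H1|]; auto. exfalso; exact (pow_nonzero _ 3 H H1). }
    subst; split; ring.
  - assert (x <> 0) by (intro; subst; simpl in Hu; lra).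
    assert (z1 = 0).
    { assert (x^3*z1 = 0) by (rewrite <- g; ring).
      destruct (Rmult_integral _ _ H0) as [H1|]; auto. exfalso; exact (pow_nonzero _ 3 H H1). }
    subst; split; ring.
Qed.

Lemma cpp_axes x y x1 y1 : x^4+y^4 = 1 -> x1^4+y1^4 = 1 -> x*y = 0 -> x1*y1 = 0 ->
  CPP (x,y) (x1,y1).
Proof.
  intros Hu Hv Hxy Hxy1.
  exists 1. split; [lra|]. exists 1. split; [lra|].
  intros [z1 z2] [w1 w2] a b Bz Sz Bw Sw Ball SP.
  apply sphere_iff in Sz. apply sphere_iff in Sw. apply sphere_iff in SP.
  rewrite P4_pair in Sz, Sw.
  apply birk_to in Bz; auto. apply birk_to in Bw; auto.
  unfold vadd, vscal, P4 in SP. cbn [fst snd] in SP.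
  apply le1_iff. unfold vadd, vscal, P4. cbn [fst snd].
  destruct (axis_ST _ _ _ _ Hu Hxy Bz) as [S1 T1].
  destruct (axis_ST _ _ _ _ Hv Hxy1 Bw) as [S2 T2].
  rewrite expand, Hv, Bw, Sw, S2, T2. rewrite expand, Hu, Bz, Sz, S1, T1 in SP.
  replace (b*1) with b by ring. lra.
Qed.

Lemma sqrt4_pow t : 0 <= t -> sqrt (sqrt t) ^ 4 = t.
Proof.
  intro H. assert (H1 : 0 <= sqrt t) by apply sqrt_pos.
  replace (sqrt (sqrt t) ^ 4) with
    ((sqrt (sqrt t) * sqrt (sqrt t)) * (sqrt (sqrt t) * sqrt (sqrt t))) by ring.
  rewrite !sqrt_sqrt; auto.
Qed.

Lemma not_cpp x y x1 y1 : x^4+y^4 = 1 -> x1^4+y1^4 = 1 -> x*y = 0 -> x1*y1 <> 0 ->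
  ~ CPP (x,y) (x1,y1).
Proof.
  intros Hu Hv Hxy Hxy1 [r [Hr [mu [Hmu H]]]].
  set (K1 := x1^12 + y1^12).
  assert (HK : 0 < K1).
  { unfold K1. assert (x1 <> 0) by (intro; subst; apply Hxy1; ring).
    assert (0 < x1^12) by (replace (x1^12) with ((x1^6)^2) by ring; apply pow_lt || nra;
      assert (x1^6 <> 0) by (apply pow_nonzero; auto); nra).
    assert (0 <= y1^12) by (replace (y1^12) with ((y1^6)^2) by ring; apply sqpos). lra. }
  set (tau := / sqrt (sqrt K1)).
  assert (Ht4 : tau^4 * K1 = 1).
  { unfold tau. rewrite pow_inv. rewrite sqrt4_pow by lra. field. lra. }
  set (w1 := - tau * y1^3). set (w2 := tau * x1^3).
  set (m1 := x1^2*y1^2).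
  assert (Hm1 : 0 < m1) by (unfold m1; replace (x1^2*y1^2) with ((x1*y1)^2) by ring; nra).
  set (b := Rmin (Rmin (1/2) (r/2)) (Rmin (m1/(8*mu)) (mu^2*m1))).
  assert (Hb0 : 0 < b).
  { unfold b. assert (0 < m1/(8*mu)) by (apply Rdiv_lt_0_compat; lra).
    assert (0 < mu^2*m1) by (apply Rmult_lt_0_compat; [apply pow_lt; lra| lra]).
    apply Rmin_glb_lt; apply Rmin_glb_lt; lra. }
  assert (Hb1 : b <= 1/2) by (unfold b; eapply Rle_trans; [apply Rmin_l|apply Rmin_l]).
  assert (Hb2 : b <= r/2) by (unfold b; eapply Rle_trans; [apply Rmin_l|apply Rmin_r]).
  assert (Hb3 : b <= m1/(8*mu)) by (unfold b; eapply Rle_trans; [apply Rmin_r|apply Rmin_l]).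
  assert (Hb4 : b <= mu^2*m1) by (unfold b; eapply Rle_trans; [apply Rmin_r|apply Rmin_r]).
  assert (Hb4p : b^4 <= 1/16).
  { replace (b^4) with ((b*b)*(b*b)) by ring. assert (b*b <= 1/4) by nra. nra. }
  set (a := sqrt (sqrt (1 - b^4))).
  assert (Ha4 : a^4 = 1 - b^4) by (apply sqrt4_pow; lra).
  assert (Ha0 : 0 <= a) by apply sqrt_pos.
  assert (Ha1 : a <= 1).
  { apply (proj2 (pow4_le_iff a 1 Ha0 ltac:(lra))). rewrite Ha4. assert (0 <= b^4) by nra. simpl; lra. }
  assert (Ha2 : 15/16 <= a^2).
  { assert (a^4 <= a^2) by (replace (a^4) with (a^2*a^2) by ring; assert (a^2 <= 1) by nra; assert (0<=a^2) by apply sqpos; nra). lra. }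
  assert (Ha3 : 1 - a <= b^4).
  { assert (a^4 <= a) by (replace (a^4) with (a*(a*a*a)) by ring; assert (a*a*a <= 1) by (apply prod_le1; [split; [nra|apply prod_le1; lra]| lra]); nra). lra. }
  specialize (H (y,x) (w1,w2) a b).
  assert (Sw : w1^4 + w2^4 = 1) by (rewrite <- Ht4; unfold w1, w2, K1; ring).
  assert (Bw : x1^3*w1 + y1^3*w2 = 0) by (unfold w1, w2; ring).
  assert (Bz : x^3*y + y^3*x = 0) by (replace (x^3*y + y^3*x) with ((x*y)*(x^2+y^2)) by ring; rewrite Hxy; ring).
  assert (C : norm4 (vadd (vscal a (x1, y1)) (vscal (b * mu) (w1, w2))) <= 1).
  { apply H.
    - apply birk_of; exact Bz.
    - apply sphere_iff; rewrite P4_pair; lra.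
    - apply birk_of; exact Bw.
    - apply sphere_iff; rewrite P4_pair; lra.
    - apply ball_iff; [lra|]. unfold vsub, vadd, vscal, P4; cbn [fst snd].
      replace (a * x + b * y + -1 * x) with ((a-1)*x + b*y) by ring.
      replace (a * y + b * x + -1 * y) with ((a-1)*y + b*x) by ring.
      rewrite expand. replace (y^3*x) with (x^3*y*0 + y^3*x) by ring.
      assert (E0 : x^3*y = 0) by (replace (x^3*y) with ((x*y)*x^2) by ring; rewrite Hxy; ring).
      assert (E1 : x^2*y^2 = 0) by (replace (x^2*y^2) with ((x*y)^2) by ring; rewrite Hxy; ring).
      assert (E2 : x*y^3 = 0) by (replace (x*y^3) with ((x*y)*y^2) by ring; rewrite Hxy; ring).
      replace (x ^ 2 * y ^ 2 + y ^ 2 * x ^ 2) with (2*(x^2*y^2)) by ring.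
      replace (x * y ^ 3 + y * x ^ 3) with (x*y^3 + x^3*y) by ring.
      rewrite E0, E1, E2, Hu. replace (y^4 + x^4) with 1 by lra.
      assert ((a-1)^4 <= b^4).
      { apply pow4_le_iff in Ha3. 2: lra. 2: nra. 
        replace ((a-1)^4) with ((1-a)^4) by ring. eapply Rle_trans; [exact Ha3|].
        assert (0 <= b^4) by nra. replace ((b^4)^4) with (b^4*(b^4*(b^4*b^4))) by ring.
        assert (b^4*(b^4*b^4) <= 1) by (apply prod_le1; [lra|split; [nra|apply prod_le1; lra]]).
        nra. }
      assert (b^4 <= (r/2)^4) by (apply pow4_le; lra).
      assert ((r/2)^4 = r^4/16) by field. assert (0 < r^4) by (apply pow_lt; lra).
      assert (E3 : y^3*x = 0) by (replace (y^3*x) with ((x*y)*y^2) by ring; rewrite Hxy; ring).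
      rewrite E3. lra.
    - apply sphere_iff. unfold vadd, vscal, P4; cbn [fst snd].
      rewrite expand. 
      assert (E0 : x^3*y + y^3*x = 0) by exact Bz.
      assert (E1 : x^2*y^2 + y^2*x^2 = 0) by (replace (x^2*y^2 + y^2*x^2) with (2*(x*y)^2) by ring; rewrite Hxy; ring).
      assert (E2 : x*y^3 + y*x^3 = 0) by (replace (x*y^3 + y*x^3) with ((x*y)*(x^2+y^2)) by ring; rewrite Hxy; ring).
      rewrite E0, E1, E2, Hu. replace (y^4 + x^4) with 1 by lra. lra. }
  apply le1_iff in C. unfold vadd, vscal, P4 in C; cbn [fst snd] in C.
  rewrite expand, Hv, Bw, Sw in C.
  destruct (ST_bounds x1 y1 w1 w2 Hv Sw) as [_ [Tv Sv2]]. fold m1 in Sv2.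
  set (Sv := x1^2*w1^2+y1^2*w2^2) in *. set (Tv_ := x1*w1^3+y1*w2^3) in *.
  assert (KV : - (2*b) <= b*Tv_ /\ b*Tv_ <= 2*b).
  { apply neg_bound; [lra|]. replace ((b*Tv_)^2) with (b^2*Tv_^2) by ring.
    replace ((2*b)^2) with (b^2*4) by ring.
    apply Rmult_le_compat_l; [apply sqpos|lra]. }
  assert (Inner : 0 < 6*a^2*mu^2*Sv + 4*a*mu^3*(b*Tv_) + mu^4*b^2 - b^2).
  { assert (0 < mu^2) by (apply pow_lt; lra).
    assert (i1 : 5*(mu^2*m1) <= 6*a^2*mu^2*Sv).
    { assert (mu^2*m1 <= mu^2*Sv) by (apply Rmult_le_compat_l; lra).
      assert (0 <= mu^2*m1) by nra. nra. }
    assert (0 < mu^3) by (apply pow_lt; lra).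
    assert (i2 : - (mu^2*m1) <= 4*a*mu^3*(b*Tv_)).
    { assert (8*mu*b <= m1).
      { apply (Rmult_le_compat_l (8*mu)) in Hb3; [|lra].
        replace (8*mu*(m1/(8*mu))) with m1 in Hb3 by (field; lra). lra. }
      assert (mu^3*(-(2*b)) <= mu^3*(b*Tv_)) by (apply Rmult_le_compat_l; lra).
      assert (0 <= mu^3*b) by nra.
      assert (a*(mu^3*b) <= 1*(mu^3*b)) by (apply Rmult_le_compat_r; lra).
      assert (a*(mu^3*(-(2*b))) <= a*(mu^3*(b*Tv_))) by (apply Rmult_le_compat_l; lra).
      assert (mu^2*(8*mu*b) <= mu^2*m1) by (apply Rmult_le_compat_l; lra).
      replace (4*a*mu^3*(b*Tv_)) with (4*(a*(mu^3*(b*Tv_)))) by ring.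
      replace (mu^2*(8*mu*b)) with (8*(mu^3*b)) in * by ring. nra. }
    assert (i3 : b^2 <= (mu^2*m1)/2).
    { assert (b*b <= b*(1/2)) by (apply Rmult_le_compat_l; lra).
      replace (b^2) with (b*b) by ring. lra. }
    assert (0 <= mu^4*b^2) by (assert (0 <= mu^4) by (apply pow_le; lra); assert (0 <= b^2) by apply sqpos; nra).
    assert (0 < mu^2*m1) by nra.
    lra. }
  assert (0 < b^2) by (apply pow_lt; lra).
  assert (0 < b^2 * (6*a^2*mu^2*Sv + 4*a*mu^3*(b*Tv_) + mu^4*b^2 - b^2)) by (apply Rmult_lt_0_compat; lra).
  assert (E : a ^ 4 * 1 + 4 * a ^ 3 * (b * mu) * 0 + 6 * a ^ 2 * (b * mu) ^ 2 * Sv +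
   4 * a * (b * mu) ^ 3 * Tv_ + (b * mu) ^ 4 * 1 = a^4 + b^4 + b^2 * (6*a^2*mu^2*Sv + 4*a*mu^3*(b*Tv_) + mu^4*b^2 - b^2)) by ring.
  lra.
Qed.

Theorem mainTheorem11 (x y x1 y1 : R) :
  in_sphere (x, y) -> in_sphere (x1, y1) ->
  (~ CPP (x, y) (x1, y1) <-> (x * y = 0 /\ x1 * y1 <> 0)).
Proof.
  intros Su Sv. apply sphere_iff in Su. apply sphere_iff in Sv.
  rewrite P4_pair in Su, Sv. split.
  - intro nC. destruct (Req_dec (x*y) 0) as [H0|H0].
    + split; auto. intro h1. apply nC; apply cpp_axes; auto.
    + exfalso; apply nC; apply cpp_nonaxis; auto.
  - intros [h1 h2]; apply not_cpp; auto.
Qed.
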